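(* Let $N\ge 1$ and $\nu\in\mathbb S_N$. For $k\in\mathbb Z$ put $F_k(\nu):=\mathrm{Dim}_{1,N}(k,\nu)/\mathrm{Dim}_N\nu$, and set $$H^*(t;\nu)=\prod_{j=1}^N\frac{t+j}{t+j-\nu_j},$$ where $t$ is a formal variable. Then the following identity of rational functions of $t$ holds: $$H^*(t;\nu)=\sum_{k\in\mathbb Z}F_k(\nu)\,\frac{(t+1)(t+2)\cdots(t+N)}{(t+1-k)(t+2-k)\cdots(t+N-k)}.$$ The sum is finite, because $F_k(\nu)=0$ unless $\nu_N\le k\le\nu_1$.
   Context: For $N\ge1$, a signature of length $N$ is an $N$-tuple of integers $\nu=(\nu_1\ge\nu_2\ge\dots\ge\nu_N)$, and $\mathbb S_N\subset\mathbb Z^N$ denotes the set of all of them; in particular $\mathbb S_1=\mathbb Z$. For $\nu\in\mathbb S_N$ and $\lambda\in\mathbb S_{N-1}$ write $\lambda\prec\nu$ (the two signatures are interlaced) if $\nu_i\ge\lambda_i\ge\nu_{i+1}$ for $i=1,\dots,N-1$. Weyl's dimension is $\mathrm{Dim}_N\nu=\prod_{1\le i<j\le N}\frac{\nu_i-\nu_j-i+j}{j-i}$. For $K<N$, $\kappa\in\mathbb S_K$ and $\nu\in\mathbb S_N$, $\mathrm{Dim}_{K,N}(\kappa,\nu)$ is the number of chains $\kappa=\lambda^{(K)}\prec\lambda^{(K+1)}\prec\dots\prec\lambda^{(N)}=\nu$ with $\lambda^{(j)}\in\mathbb S_j$. *)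

(* Defs.v *)
From HB Require Import structures.
From mathcomp Require Import all_boot all_order all_algebra fraction.
Set Implicit Arguments. Unset Strict Implicit. Unset Printing Implicit Defensive.
Import Order.TTheory GRing.Theory Num.Theory.
Local Open Scope ring_scope.

(* Signatures of length N are represented as s : seq int with size s = N,
   non-increasing; entry nu_i (1-based in the paper) is nu`_(i-1). *)
Definition is_signature (N : nat) (s : seq int) : bool :=
  (size s == N) && sorted (fun a b : int => b <= a) s.

Definition irange (a b : int) : seq int :=
  if a <= b then [seq a + (i%:Z) | i <- iota 0 `|b - a|.+1] else [::].

(* all lambda in S_{N-1} with lambda ≺ nu, for nu in S_N (N >= 1):
   nu_i >= lambda_i >= nu_{i+1}. *)
Fixpoint interl (nu : seq int) : seq (seq int) :=
  match nu with
  | [::] => [::]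
  | [:: _] => [:: [::]]
  | x :: ((y :: _) as nu') =>
      [seq l :: s | l <- irange y x, s <- interl nu']
  end.

(* number of chains kappa = lambda^(N-n) ≺ ... ≺ lambda^(N) = nu of length n *)
Fixpoint chains (n : nat) (kappa nu : seq int) : nat :=
  match n with
  | 0 => (nu == kappa : nat)
  | n'.+1 => sumn [seq chains n' kappa l | l <- interl nu]
  end.

Definition DimKN (K N : nat) (kappa nu : seq int) : nat := chains (N - K) kappa nu.

Definition DimN (N : nat) (nu : seq int) : rat :=
  \prod_(i < N) \prod_(j < N | (i < j)%N)
     (((nu`_i - nu`_j - (i : nat)%:Z + (j : nat)%:Z)%:~R : rat) / ((j - i)%N)%:R).

Definition Fk (N : nat) (k : int) (nu : seq int) : rat :=
  ((DimKN 1 N [:: k] nu)%:R : rat) / DimN N nu.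

Definition tvar : {fraction {poly rat}} := FracField.tofrac ('X : {poly rat}).

Definition cst (q : rat) : {fraction {poly rat}} := FracField.tofrac (q%:P).

Definition Hstar (N : nat) (nu : seq int) : {fraction {poly rat}} :=
  \prod_(j < N) ((tvar + ((j.+1)%:R)) / (tvar + ((j.+1)%:R) - (nu`_j)%:~R)).

Definition ratk (N : nat) (k : int) : {fraction {poly rat}} :=
  \prod_(j < N) ((tvar + ((j.+1)%:R)) / (tvar + ((j.+1)%:R) - k%:~R)).

(* Main.v *)
Require Import Defs.
From HB Require Import structures.
From mathcomp Require Import all_boot all_order all_algebra fraction zify ring perm.
Set Implicit Arguments. Unset Strict Implicit. Unset Printing Implicit Defensive.
Import Order.TTheory GRing.Theory Num.Theory.
Local Open Scope ring_scope.

Lemma irangeE (a b : int) : a <= b ->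
  irange a b = [seq a + (i%:Z) | i <- iota 0 `|b - a|.+1].
Proof. by rewrite /irange => ->. Qed.

Lemma mem_irange (a b x : int) : (x \in irange a b) = (a <= x <= b).
Proof.
rewrite /irange; case: ifP => hab; last first.
  by rewrite in_nil; apply/esym/negbTE/negP => /andP[h1 h2]; move: hab; lia.
apply/mapP/idP.
  move=> [i]; rewrite mem_iota add0n ltnS => /andP[_ hi] ->.
  have hba : 0 <= b - a by rewrite subr_ge0.
  rewrite lerDl /=.
lia.
move=> /andP[h1 h2]; exists `|x - a|%N.
  rewrite mem_iota add0n ltnS; lia.
lia.
Qed.

Lemma irange_uniq (a b : int) : uniq (irange a b).
Proof.
rewrite /irange; case: ifP => // _; rewrite map_inj_uniq ?iota_uniq //.
by move=> i j /addrI /eqP; rewrite eqz_nat => /eqP.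
Qed.

Lemma tele_irange (V : zmodType) (g : int -> V) (a b : int) : a <= b ->
  \sum_(x <- irange a b) (g x - g (x - 1)) = g b - g (a - 1).
Proof.
move=> hab; rewrite irangeE // big_map.
pose G (i : nat) := g (a + i%:Z - 1).
have -> : \sum_(j <- iota 0 `|b - a|.+1) (g (a + j%:Z) - g (a + j%:Z - 1))
        = \sum_(0 <= j < `|b - a|.+1) (G j.+1 - G j).
  apply: eq_bigr => j _; rewrite /G -addn1 PoszD addrA addrK //.
rewrite telescope_sumr // /G addr0 -addn1 PoszD gez0_abs ?subr_ge0 //.
by rewrite addrA addrK addrC subrK.
Qed.

Lemma interl_prop (nu l : seq int) : l \in interl nu ->
  size l = (size nu).-1 /\
  forall i, (i < size l)%N -> nu`_i.+1 <= l`_i <= nu`_i.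
Proof.
elim: nu l => [|x [|y r] IH] l //=.
  by rewrite mem_seq1 => /eqP ->.
move=> /allpairsPdep [a [s [ha hs ->]]].
have [sz hi] := IH s hs; split; first by rewrite /= sz.
case=> [|i] /=; first by rewrite -mem_irange.
rewrite ltnS => /hi; done.
Qed.

Lemma PL (R : comNzRingType) (nu : seq int) (f : nat -> int -> R) : (0 < size nu)%N ->
  \sum_(l <- interl nu) \prod_(i < (size nu).-1) f i l`_i =
  \prod_(i < (size nu).-1) \sum_(x <- irange nu`_i.+1 nu`_i) f i x.
Proof.
elim: nu f => [|x [|y r] IH] f //= _.
  by rewrite big_seq1 !big_ord0.
rewrite big_allpairs_dep /= big_ord_recl /= mulr_suml; apply: eq_bigr => a _.
under eq_bigr => s _ do rewrite big_ord_recl.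
rewrite /= -mulr_sumr; congr (_ * _).
have := IH (fun i => f i.+1) isT; rewrite /= => ->.
by apply: eq_bigr => i _; rewrite /bump leq0n add0n add1n.
Qed.

Lemma chains_range n (k : int) (nu : seq int) : size nu = n.+1 ->
  chains n [:: k] nu <> 0%N -> nu`_n <= k <= nu`_0.
Proof.
elim: n nu => [|n IH] nu hs /=.
  by case: eqP => // -> _; rewrite lexx.
rewrite sumnE big_map => h.
case: (boolP (has (fun l => chains n [:: k] l != 0%N) (interl nu))) => [/hasP[l hl /eqP hc] | /hasPn H]; last first.
  by exfalso; apply: h; rewrite big1_seq // => l /andP[_ /H]; rewrite negbK => /eqP.
have [sz hi] := interl_prop hl.
have szl : size l = n.+1 by rewrite sz hs.
have := IH l szl hc => /andP[h1 h2].
have := hi 0%N; rewrite szl => /(_ isT) /andP[_ h3].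
have := hi n; rewrite szl => /(_ (ltnSn n)) /andP[h4 _].
apply/andP; split; [exact: le_trans h4 h1 | exact: le_trans h2 h3].
Qed.

Lemma GV (F : comNzRingType) m (f : 'I_m -> {poly F}) (y : 'I_m -> F) :
  (forall i : 'I_m, size (f i) <= i.+1)%N ->
  \det (\matrix_(i, j) (f i).[y j]) =
  (\prod_i (f i)`_i) * \prod_(i < m) \prod_(j < m | (i < j)%N) (y j - y i).
Proof.
move=> hf.
pose C : 'M[F]_m := \matrix_(i, k) (f i)`_k.
have -> : \matrix_(i, j) (f i).[y j] = C *m Vandermonde m (\row_j y j).
  apply/matrixP => i j; rewrite !mxE (horner_coef_wide _ (leq_trans (hf i) (ltn_ord i))).
  by apply: eq_bigr => k _; rewrite !mxE.
rewrite det_mulmx det_Vandermonde det_trig.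
  congr (_ * _); first by apply: eq_bigr => i _; rewrite mxE.
  by apply: eq_bigr => i _; apply: eq_bigr => j _; rewrite !mxE.
apply/is_trig_mxP => i j lij; rewrite mxE nth_default //.
exact: leq_trans (hf i) lij.
Qed.


Definition Rv (F : nzRingType) (a : nat) (y : F) : F := \prod_(r < a) (y + (r.+1)%:R).
Definition Rp (F : nzRingType) (a : nat) : {poly F} := \prod_(r < a) ('X - (- (r.+1)%:R)%:P).

Lemma Rp_size (F : nzRingType) a : size (Rp F a) = a.+1.
Proof. by rewrite /Rp size_prod_XsubC; congr _.+1; rewrite -[RHS](size_enum_ord a) enumT. Qed.
Lemma Rp_monic (F : nzRingType) a : Rp F a \is monic.
Proof. exact: monic_prod_XsubC. Qed.
Lemma Rp_horner (F : comNzRingType) a y : (Rp F a).[y] = Rv a y.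
Proof. by rewrite /Rp horner_prod; apply: eq_bigr => r _; rewrite hornerXsubC opprK. Qed.

Lemma CV (F : fieldType) m (a : F) (y : 'I_m.+1 -> F) :
  (forall j, a - y j != 0) ->
  \det (\matrix_(i, j) (if i == 0 :> nat then (a - y j)^-1 else Rv i.-1 (y j)))
   * \prod_j (a - y j)
  = (-1) ^+ m * \prod_(i < m.+1) \prod_(j < m.+1 | (i < j)%N) (y j - y i).
Proof.
move=> hy.
pose f (i : 'I_m.+1) : {poly F} :=
  if i == 0 :> nat then 1 else - (Rp F i.-1 * ('X - a%:P)).
have sz (i : 'I_m.+1) : i != 0 :> nat -> size (Rp F i.-1 * ('X - a%:P)) = i.+1.
  move=> i0; rewrite size_Mmonic ?monicXsubC ?Rp_size ?size_XsubC //.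
    by rewrite addn2 /=; case: (nat_of_ord i) i0.
  by rewrite -size_poly_eq0 Rp_size.
have -> : \prod_j (a - y j) = \det (diag_mx (\row_j (a - y j))).
  by rewrite det_diag; apply: eq_bigr => j _; rewrite mxE.
rewrite -det_mulmx mul_mx_diag.
have -> : \matrix_(i, j)
   ((\matrix_(i0, j0) (if i0 == 0 :> nat then (a - y j0)^-1 else Rv i0.-1 (y j0))) i j *
    (\row_j0 (a - y j0)) 0 j) = \matrix_(i, j) (f i).[y j].
  apply/matrixP => i j; rewrite !mxE /f; case: ifP => _.
    by rewrite hornerC mulVf.
  by rewrite hornerN hornerM Rp_horner hornerXsubC -mulrN opprB.
rewrite GV; last first.
  by move=> i; rewrite /f; case: ifP => i0; rewrite ?size_poly1 // size_opp sz ?i0.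
congr (_ * _).
rewrite big_ord_recl /f /= coefC eqxx mul1r.
have -> : (-1) ^+ m = \prod_(i < m) (-1 : F) by rewrite prodr_const card_ord.
apply: eq_bigr => i _.
rewrite /= coefN add0n.
have hs : size (Rp F i * ('X - a%:P)) = i.+2.
  by rewrite size_Mmonic ?monicXsubC ?Rp_size ?size_XsubC ?addn2 // -size_poly_eq0 Rp_size.
rewrite /bump leq0n add1n -[i.+1]/((i.+2).-1) -hs -lead_coefE lead_coef_Mmonic ?monicXsubC //.
by rewrite (eqP (Rp_monic F i)).
Qed.

Lemma Border (F : comNzRingType) k (A : 'M[F]_k.+2) :
  (forall j, A (lift ord0 ord0) j = 1) ->
  \det A = (-1) ^+ k * \det (\matrix_(i, j)
     (A (lift (lift ord0 ord0) i) (lift ord_max j) - A (lift (lift ord0 ord0) i) (lift ord0 j))).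
Proof.
move=> h1; set i1 := lift ord0 ord0.
pose S : 'M[F]_k.+2 := \matrix_(i, j) (i == j.+1 :> nat)%:R.
pose U : 'M[F]_k.+2 := 1%:M - S.
have dU : \det U = 1.
  rewrite det_trig; last first.
    apply/is_trig_mxP => i j lij; rewrite !mxE.
    have /negbTE -> : i != j by rewrite -val_eqE /= ltn_eqF.
    rewrite (_ : (i == j.+1 :> nat) = false) ?subr0 //.
    by apply/negbTE/eqP => e; move: lij; rewrite e ltnNge leqnSn.
  by rewrite big1 // => i _; rewrite !mxE eqxx (ltn_eqF (ltnSn i)) subr0.
have AS (i : 'I_k.+2) (j : 'I_k.+1) : (A *m S) i (lift ord_max j) = A i (lift ord0 j).
  have b0 : bump 0 j = j.+1 by rewrite /bump leq0n add1n.
  have bm : bump k.+1 j = j by rewrite /bump leqNgt ltn_ord.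
  rewrite mxE (bigD1 (lift ord0 j)) //= !mxE /= b0 bm eqxx mulr1.
  rewrite big1 ?addr0 // => l hl; rewrite !mxE /= bm.
  rewrite (_ : (l == _ :> nat) = false) ?mulr0 //; apply/negbTE; apply: contra hl.
  by move=> /eqP hl; apply/eqP/val_inj => /=; rewrite hl b0.
have AS' (i : 'I_k.+2) : (A *m S) i ord_max = 0.
  rewrite mxE big1 // => l _; rewrite !mxE (_ : (l == _ :> nat) = false) ?mulr0 //.
  by apply/negbTE; rewrite neq_ltn (leq_trans (ltn_ord l)).
have AU i j : (A *m U) i j = A i j - (A *m S) i j.
  by rewrite /U mulmxBr mulmx1 mxE [X in _ + X]mxE.
have -> : \det A = \det (A *m U) by rewrite det_mulmx dU mulr1.
rewrite (expand_det_row _ i1).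
rewrite (bigD1 ord_max) //= big1 ?addr0; last first.
  move=> j hj; case: (unliftP ord_max j) => [j' ->|e]; last by rewrite e eqxx in hj.
  by rewrite AU AS !h1 subrr mul0r.
rewrite AU AS' subr0 h1 mul1r /cofactor.
congr (_ * _).
  by rewrite (_ : (i1 + ord_max)%N = k.+2) // !exprS !mulN1r opprK.
apply: congr1; apply/matrixP => i j.
rewrite [RHS]mxE -AS -AU.
by rewrite mxE [in LHS]mxE.
Qed.

Lemma Rv_diff (R : comNzRingType) a (y : R) : Rv a.+1 y - Rv a.+1 (y - 1) = a.+1%:R * Rv a y.
Proof.
have e1 : Rv a.+1 y = Rv a y * (y + a.+1%:R) by rewrite /Rv big_ord_recr.
have e2 : Rv a.+1 (y - 1) = y * Rv a y.
  rewrite /Rv big_ord_recl; congr (_ * _); first by rewrite /= subrK.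
  by apply: eq_bigr => r _; rewrite lift0; ring.
rewrite e1 e2; ring.
Qed.

Lemma SI (R : comNzRingType) n (nu : seq int) (G : 'I_n.+1 -> 'I_n.+1 -> int -> R) :
  size nu = n.+2 ->
  \sum_(l <- interl nu) \det (\matrix_(i, j) G i j l`_j) =
  \det (\matrix_(i, j) \sum_(x <- irange nu`_j.+1 nu`_j) G i j x).
Proof.
move=> hs.
under eq_bigr do rewrite -det_tr.
rewrite -det_tr /determinant exchange_big /=; apply: eq_bigr => s _.
rewrite -mulr_sumr; congr (_ * _).
pose f (j : nat) (x : int) := G (s (inord j)) (inord j) x.
have := PL f (_ : (0 < size nu)%N); rewrite hs /= => /(_ isT) e.
transitivity (\sum_(l <- interl nu) \prod_(i < n.+1) f i l`_i).
  apply: eq_bigr => l _; apply: eq_bigr => i _; by rewrite !mxE /f inord_val.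
rewrite e; apply: eq_bigr => i _; rewrite !mxE /f inord_val.
by apply: eq_bigr => x _.
Qed.

Notation K := {fraction {poly rat}}.
Definition cstM : {rmorphism rat -> K} := (@FracField.tofrac {poly rat}) \o (@polyC rat).
Lemma cstE q : cst q = cstM q. Proof. by []. Qed.

Lemma intK_eq0 (z : int) : ((z%:~R : K) == 0) = (z == 0).
Proof. by rewrite -(rmorph_int cstM) fmorph_eq0 intr_eq0. Qed.
Lemma natK_eq0 (n : nat) : ((n%:R : K) == 0) = (n == 0)%N.
Proof. by rewrite -(rmorph_nat cstM) fmorph_eq0 pnatr_eq0. Qed.

Definition good (s : K) := forall z : int, s + z%:~R != 0.

Lemma good1 s : good s -> good (s + 1).
Proof. move=> g z. have := g (1 + z). rewrite intrD. rewrite addrA. done. Qed.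
Lemma good_sub s (x : int) (j : nat) : good s -> s - (x%:~R - (j%:R)) != 0.
Proof.
move=> g; have := g (j%:Z - x); rewrite intrB.
by rewrite opprB addrA.
Qed.

Lemma good_tvar : good tvar.
Proof.
move=> z; rewrite /tvar -(rmorph_int (@FracField.tofrac {poly rat})) -rmorphD tofrac_eq0.
rewrite -size_poly_eq0 (_ : z%:~R = (z%:~R : rat)%:P) ?size_XaddC //.
by rewrite -(rmorph_int (@polyC rat)).
Qed.

Definition Hs (N : nat) (nu : seq int) (s : K) : K :=
  \prod_(j < N) ((s + ((j.+1)%:R)) / (s + ((j.+1)%:R) - (nu`_j)%:~R)).
Definition rk (N : nat) (k : int) (s : K) : K :=
  \prod_(j < N) ((s + ((j.+1)%:R)) / (s + ((j.+1)%:R) - k%:~R)).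
Definition Pf (N : nat) (s : K) : K := \prod_(j < N) (s + (j.+1)%:R).
Definition Mv (nu : seq int) (j : nat) : K := (nu`_j)%:~R - (j.+1)%:R.
Definition Vt m (y : nat -> K) : K := \prod_(i < m) \prod_(j < m | (i < j)%N) (y j - y i).
Definition cc m : K := \prod_(i < m) \prod_(j < m | (i < j)%N) ((i:int) - (j:int))%:~R.

Lemma HsE m nu s : Hs m nu s = Pf m s / \prod_(j < m) (s - Mv nu j).
Proof.
rewrite /Hs prodf_div; congr (_ / _); apply: eq_bigr => j _; rewrite /Mv; ring.
Qed.

Lemma DimE m nu : cst (DimN m nu) = Vt m (Mv nu) / cc m.
Proof.
rewrite cstE /DimN rmorph_prod /Vt /cc -prodf_div; apply: eq_bigr => i _.
rewrite rmorph_prod -prodf_div; apply: eq_bigr => j hij.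
rewrite fmorph_div rmorph_int rmorph_nat /Mv.
have e1 : ((nu`_i - nu`_j - i%:Z + j%:Z)%:~R : K) = - (((nu`_j)%:~R - (j.+1)%:R) - ((nu`_i)%:~R - (i.+1)%:R)).
  rewrite !intrD !intrN; ring.
have e2 : (((j - i)%N)%:R : K) = - ((i%:Z - j%:Z)%:~R).
  rewrite natrB ?(ltnW hij) // intrB; ring.
by rewrite e1 e2 invrN mulrNN.
Qed.

Lemma rkE m k s : rk m k s = Pf m s / \prod_(j < m) (s + (j.+1)%:R - k%:~R).
Proof. by rewrite /rk prodf_div. Qed.

Lemma good_nat s (j : nat) (k : int) : good s -> s + j%:R - k%:~R != 0.
Proof. by move=> g; have := g (j%:Z - k); rewrite intrB addrA. Qed.

Lemma aux (F : fieldType) (P B a b c : F) : a != 0 -> b != 0 -> B != 0 -> b - a != 0 ->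
  P * c / (a * B * b) = (c * P / (a * B) - P * c / (B * b)) / (b - a).
Proof. move=> ha hb hB hm. field. by rewrite ha hb hB hm. Qed.

Lemma rk_rec n k s : good s -> rk n.+2 k s =
  ((s + (n.+2)%:R) * rk n.+1 k s - (s + 1) * rk n.+1 k (s + 1)) / (n.+1)%:R.
Proof.
move=> g; rewrite !rkE.
set A := \prod_(j < n) (s + (j.+2)%:R - k%:~R).
have q1 : \prod_(j < n.+1) (s + (j.+1)%:R - k%:~R) = (s + 1 - k%:~R) * A.
  by rewrite big_ord_recl; congr (_ * _); apply: eq_bigr => j _.
have q2 : \prod_(j < n.+1) (s + 1 + (j.+1)%:R - k%:~R) = A * (s + (n.+2)%:R - k%:~R).
  rewrite big_ord_recr; congr (_ * _); last by ring.
  by apply: eq_bigr => j _; ring.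
have q3 : \prod_(j < n.+2) (s + (j.+1)%:R - k%:~R) = (s + 1 - k%:~R) * A * (s + (n.+2)%:R - k%:~R).
  by rewrite big_ord_recr q1.
have p1 : Pf n.+2 s = Pf n.+1 s * (s + (n.+2)%:R) by rewrite /Pf big_ord_recr.
have p2 : Pf n.+2 s = (s + 1) * Pf n.+1 (s + 1).
  rewrite /Pf big_ord_recl; congr (_ * _); apply: eq_bigr => j _.
rewrite lift0; ring.
have p3 : (s + 1) * Pf n.+1 (s + 1) = Pf n.+1 s * (s + (n.+2)%:R) by rewrite -p1 -p2.
rewrite q1 q2 q3 [(s + 1) * (_ / _)]mulrA p3 p1.
have h1 : s + 1 - k%:~R != 0 by have := good_nat 1 k g.
have h2 := good_nat n.+2 k g.
have hA : A != 0 by apply/prodf_neq0 => j _; exact: good_nat.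
have hn : (n.+1)%:R != 0 :> K by rewrite natK_eq0.
have e : (s + (n.+2)%:R - k%:~R) - (s + 1 - k%:~R) = (n.+1)%:R.
  by rewrite -[(n.+2)%:R]natr1 -natr1; ring.
rewrite -e.
rewrite (mulrA (s + _)).
apply: aux; [exact: h1 | exact: h2 | exact: hA | rewrite e; exact: hn].
Qed.

Lemma PfS1 m s : Pf m.+1 s = Pf m s * (s + (m.+1)%:R).
Proof. by rewrite /Pf big_ord_recr. Qed.
Lemma PfS2 m s : Pf m.+1 s = (s + 1) * Pf m (s + 1).
Proof. by rewrite /Pf big_ord_recl; congr (_ * _); apply: eq_bigr => j _; rewrite lift0; ring. Qed.

Lemma aux2 (F : fieldType) (V c P Qa Qb e Da Db : F) : e * e = 1 -> Qa != 0 -> Qb != 0 -> c != 0 ->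
  Da * Qa = e * V -> Db * Qb = e * V -> V / c * (P / Qa - P / Qb) = P / c * e * (Da - Db).
Proof.
move=> ee ha hb hc h1 h2.
have -> : Da = e * V / Qa by rewrite -h1 mulfK.
have -> : Db = e * V / Qb by rewrite -h2 mulfK.
have -> : P / c * e * (e * V / Qa - e * V / Qb) = P / c * (e * e) * (V / Qa - V / Qb) by ring.
rewrite ee; field. by rewrite ha hb hc.
Qed.

Definition Wm n (a : K) (y : nat -> K) : 'M[K]_n :=
  \matrix_(i, j) (if i == 0 :> nat then (a - y j)^-1 else Rv i.-1 (y j)).
Definition Dm n (s : K) (y : nat -> K) : 'M[K]_n :=
  \matrix_(i, j) (if i == 0 :> nat then (s - y j)^-1 - (s + 1 - y j)^-1 else Rv i.-1 (y j)).

Lemma cc_neq0 m : cc m != 0.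
Proof.
apply/prodf_neq0 => i _; apply/prodf_neq0 => j hij; rewrite intK_eq0 subr_eq0.
by apply/negP => /eqP [] /eqP; rewrite (ltn_eqF hij).
Qed.

Lemma good_Mv s l j : good s -> s - Mv l j != 0.
Proof. by move=> g; rewrite /Mv; exact: good_sub. Qed.

Lemma summand n (l : seq int) s : good s ->
  cst (DimN n.+1 l) * ((s + (n.+2)%:R) * Hs n.+1 l s - (s + 1) * Hs n.+1 l (s + 1))
  = Pf n.+2 s / cc n.+1 * (-1) ^+ n * \det (Dm n.+1 s (Mv l)).
Proof.
move=> g.
have g1 := good1 g.
have cv1 : \det (Wm n.+1 s (Mv l)) * \prod_(j < n.+1) (s - Mv l j) = (-1) ^+ n * Vt n.+1 (Mv l).
  exact: (CV (a := s) (y := fun j : 'I_n.+1 => Mv l j) (fun j => good_Mv l j g)).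
have cv2 : \det (Wm n.+1 (s + 1) (Mv l)) * \prod_(j < n.+1) (s + 1 - Mv l j) = (-1) ^+ n * Vt n.+1 (Mv l).
  exact: (CV (a := s + 1) (y := fun j : 'I_n.+1 => Mv l j) (fun j => good_Mv l j g1)).
have ml : \det (Dm n.+1 s (Mv l)) = 1 * \det (Wm n.+1 s (Mv l)) + (-1) * \det (Wm n.+1 (s + 1) (Mv l)).
  apply: (determinant_multilinear (i0 := ord0)).
  - apply/rowP => j; rewrite !mxE /=; ring.
  - by apply/matrixP => i j; rewrite !mxE.
  - by apply/matrixP => i j; rewrite !mxE.
rewrite ml mul1r mulN1r DimE !HsE.
have e1 : (s + (n.+2)%:R) * Pf n.+1 s = Pf n.+2 s by rewrite [RHS]PfS1 mulrC.
have e2 : (s + 1) * Pf n.+1 (s + 1) = Pf n.+2 s by rewrite [RHS]PfS2.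
rewrite (mulrA (s + (n.+2)%:R)) e1 (mulrA (s + 1)) e2.
apply: aux2 cv1 cv2.
- by rewrite -exprMn mulrNN mulr1 expr1n.
- by apply/prodf_neq0 => j _; exact: good_Mv.
- by apply/prodf_neq0 => j _; exact: good_Mv.
- exact: cc_neq0.
Qed.

Definition Em n (nu : seq int) (s : K) : 'M[K]_n :=
  \matrix_(i, j) (if i == 0 :> nat then (s - Mv nu j)^-1 - (s - Mv nu j.+1)^-1
                  else (Rv i (Mv nu j) - Rv i (Mv nu j.+1)) / i%:R).

Lemma sorted_nth (nu : seq int) i : sorted (fun a b : int => b <= a) nu ->
  (i.+1 < size nu)%N -> nu`_i.+1 <= nu`_i.
Proof. by move=> /sortedP h /h. Qed.

Lemma boxsum n (nu : seq int) s : good s -> size nu = n.+2 ->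
  sorted (fun a b : int => b <= a) nu ->
  \sum_(l <- interl nu) \det (Dm n.+1 s (Mv l)) = \det (Em n.+1 nu s).
Proof.
move=> g hs so.
pose G (i j : 'I_n.+1) (x : int) : K :=
  if i == 0 :> nat then (s - (x%:~R - (j.+1)%:R))^-1 - (s + 1 - (x%:~R - (j.+1)%:R))^-1
  else Rv i.-1 (x%:~R - (j.+1)%:R).
transitivity (\sum_(l <- interl nu) \det (\matrix_(i, j) G i j l`_j)).
  by apply: eq_bigr => l _; apply: congr1; apply/matrixP => i j; rewrite !mxE.
rewrite SI //; apply: congr1; apply/matrixP => i j; rewrite !mxE /G.
have hj : nu`_j.+1 <= nu`_j by apply: sorted_nth; rewrite // hs ltnS.
case: ifP => i0.
  pose h (x : int) : K := (s - (x%:~R - (j.+1)%:R))^-1.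
  transitivity (\sum_(x <- irange nu`_j.+1 nu`_j) (h x - h (x - 1))).
    apply: eq_bigr => x _; rewrite /h; congr (_ - _ ^-1); rewrite intrB; ring.
  rewrite tele_irange // /h /Mv; congr (_ - _ ^-1); rewrite intrB; ring.
pose h (x : int) : K := Rv i (x%:~R - (j.+1)%:R) / i%:R.
have ni : (i%:R : K) != 0 by rewrite natK_eq0 i0.
transitivity (\sum_(x <- irange nu`_j.+1 nu`_j) (h x - h (x - 1))).
  apply: eq_bigr => x _; rewrite /h -mulrBl intrB.
  have -> : ((x%:~R - 1 - (j.+1)%:R) : K) = (x%:~R - (j.+1)%:R) - 1 by ring.
  move: i0 ni; case: (nat_of_ord i) => [//|i'] _ ni.
  by rewrite Rv_diff mulrC mulKf.
rewrite tele_irange // /h /Mv -mulrBl; congr ((Rv _ _ - Rv _ _) / _); rewrite intrB; ring.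
Qed.

Definition dd (i : nat) : K := if i == 0%N then 1 else (i%:R)^-1.

Lemma ccS m : cc m.+1 = cc m * \prod_(i < m) ((i:int) - (m:int))%:~R.
Proof.
rewrite /cc big_ord_recr /= [X in _ * X]big1 ?mulr1; last first.
  by move=> j hj; exfalso; have := ltn_ord j; move: hj => /=; lia.
rewrite -big_split /=; apply: eq_bigr => i _.
rewrite big_mkcond big_ord_recr /= ltn_ord -big_mkcond /=; congr (_ * _).
Qed.

Lemma prod_in m : \prod_(i < m) ((i:int) - (m:int))%:~R = (-1) ^+ m * \prod_(i < m) ((i.+1)%:R : K).
Proof.
have -> : (-1) ^+ m = \prod_(i < m) (-1 : K) by rewrite prodr_const card_ord.
rewrite (reindex_inj rev_ord_inj) /= -big_split /=.
apply: eq_bigr => i _.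
have -> : ((m - i.+1)%N%:Z - m%:Z) = - (i.+1)%:Z by have := ltn_ord i; lia.
by rewrite intrN mulN1r.
Qed.

Lemma prod_dd m : (0 < m)%N -> \prod_(i < m) ((i.+1)%:R : K) * \prod_(i < m) dd i = m%:R.
Proof.
case: m => [//|m] _; elim: m => [|m IH].
  by rewrite !big_ord1 /dd /= mulr1.
rewrite big_ord_recr [X in _ * X]big_ord_recr /= mulrACA IH /dd /=.
rewrite mulrC mulfVK //; rewrite natK_eq0; exact: isT.
Qed.

Lemma aux3 (F : fieldType) (n : nat) (P c V Q D detB detF fac m1 : F) :
  fac * D = m1 -> Q != 0 -> c != 0 -> fac != 0 ->
  detF * Q = - ((-1) ^+ n) * V -> detF = (-1) ^+ n * detB ->
  P / c * (-1) ^+ n * (D * detB) = m1 * (V / (c * (- (-1) ^+ n * fac))) * (P / Q).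
Proof.
move=> hD hQ hc hf h1 h2; rewrite -hD.
have -> : detB = (-1) ^+ n * detF by rewrite h2 mulrA -expr2 sqrr_sign mul1r.
have -> : detF = - (-1) ^+ n * V / Q by rewrite -h1 mulfK.
rewrite -signr_odd.
by clear h1 h2; case: (odd n); field; rewrite hQ hc hf ?oppr_eq0 ?oner_eq0.
Qed.

Lemma OS n (nu : seq int) s : good s -> size nu = n.+2 -> sorted (fun a b : int => b <= a) nu ->
  \sum_(l <- interl nu) cst (DimN n.+1 l) *
     ((s + (n.+2)%:R) * Hs n.+1 l s - (s + 1) * Hs n.+1 l (s + 1))
  = (n.+1)%:R * cst (DimN n.+2 nu) * Hs n.+2 nu s.
Proof.
move=> g hs so.
under eq_bigr => l _ do rewrite (summand n l g).
rewrite -mulr_sumr (boxsum g hs so).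
set F := Wm n.+2 s (Mv nu).
have h1 : forall j, F (lift ord0 ord0) j = 1.
  by move=> j; rewrite /F /Wm mxE /= /Rv big_ord0.
have hb := Border h1.
set Bm := \matrix_(i, j) _ in hb.
have hE : \det (Em n.+1 nu s) = (\prod_(i < n.+1) dd i) * \det Bm.
  have -> : Em n.+1 nu s = diag_mx (\row_i dd i) *m Bm.
    rewrite mul_diag_mx; apply/matrixP => i j; rewrite /Bm /F /Em /Wm !mxE.
    rewrite !lift_max !lift0.
    case: i => [[|i] hi] /=; first by rewrite /dd mul1r.
    by rewrite /dd /bump /= mulrC add0n.
  by rewrite det_mulmx det_diag; congr (_ * _); apply: eq_bigr => i _; rewrite mxE.
have cvF : \det F * \prod_(j < n.+2) (s - Mv nu j) = (-1) ^+ n.+1 * Vt n.+2 (Mv nu).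
  exact: (CV (a := s) (y := fun j : 'I_n.+2 => Mv nu j) (fun j => good_Mv nu j g)).
rewrite DimE HsE (ccS n.+1) prod_in hE exprS mulN1r.
rewrite exprS mulN1r in cvF.
rewrite -mulrA mulrA -(prod_dd (ltn0Sn n)).
apply: aux3 cvF hb.
- by [].
- by apply/prodf_neq0 => j _; exact: good_Mv.
- exact: cc_neq0.
- by apply/prodf_neq0 => j _; rewrite natK_eq0.
Qed.

Lemma sig_le N (nu : seq int) i j : is_signature N nu -> (i <= j < N)%N -> nu`_j <= nu`_i.
Proof.
move=> /andP[/eqP hs so] /andP[hij hj].
have tr : transitive (fun a b : int => b <= a) by move=> a b c' h1 h2; exact: le_trans h2 h1.
have rf : reflexive (fun a b : int => b <= a) by move=> a; exact: lexx.
apply: (sorted_leq_nth tr rf 0 so); rewrite ?inE ?hs //; exact: leq_ltn_trans hij hj.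
Qed.

Lemma interl_sig n (nu l : seq int) : is_signature n.+2 nu -> l \in interl nu ->
  [/\ is_signature n.+1 l, nu`_n.+1 <= l`_n & l`_0 <= nu`_0].
Proof.
move=> hsig hl; have [sz hi] := interl_prop hl.
have hs : size nu = n.+2 by case/andP: hsig => /eqP.
rewrite hs /= in sz.
split.
- rewrite /is_signature sz eqxx /=; apply/sortedP => i; rewrite sz => hi1.
  have := hi i; rewrite sz => /(_ (ltnW hi1)) /andP[h1 _].
  have := hi i.+1; rewrite sz => /(_ hi1) /andP[_ h2].
  exact: le_trans h2 h1.
- by have := hi n; rewrite sz => /(_ (ltnSn n)) /andP[].
- by have := hi 0%N; rewrite sz => /(_ isT) /andP[].
Qed.

Lemma ML n (nu : seq int) (c d : int) s : good s -> is_signature n.+1 nu ->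
  c <= nu`_n -> nu`_0 <= d ->
  \sum_(k <- irange c d) ((chains n [:: k] nu)%:R : K) * rk n.+1 k s
  = cst (DimN n.+1 nu) * Hs n.+1 nu s.
Proof.
elim: n nu s => [|n IH] nu s g hsig hc hd.
  have hs : size nu = 1%N by case/andP: hsig => /eqP.
  case: nu hs hsig hc hd => [|a [|]] //= _ _ hc hd.
  have ha : a \in irange c d by rewrite mem_irange hc hd.
  rewrite (bigD1_seq a ha (irange_uniq c d)) /= eqxx mul1r big1; last first.
    by move=> k hk; rewrite eqseq_cons andbT eq_sym (negbTE hk) mul0r.
  rewrite addr0 /DimN !big_ord1 big1; last by move=> j; rewrite (ord1 j).
  rewrite cstE rmorph1 mul1r.
  by rewrite /rk /Hs; apply: eq_bigr => j _; rewrite (ord1 j).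
have hs : size nu = n.+2 by case/andP: hsig => /eqP.
have so : sorted (fun a b : int => b <= a) nu by case/andP: hsig.
transitivity (\sum_(l <- interl nu) \sum_(k <- irange c d)
                ((chains n [:: k] l)%:R : K) * rk n.+2 k s).
  rewrite exchange_big /=; apply: eq_bigr => k _.
  by rewrite sumnE big_map natr_sum mulr_suml.
transitivity (\sum_(l <- interl nu) cst (DimN n.+1 l) *
     ((s + (n.+2)%:R) * Hs n.+1 l s - (s + 1) * Hs n.+1 l (s + 1)) / (n.+1)%:R).
  apply: eq_big_seq => l hl.
  have [sl h1 h2] := interl_sig hsig hl.
  have hc' : c <= l`_n by apply: le_trans h1; apply: le_trans hc; exact: lexx.
  have hd' : l`_0 <= d by exact: le_trans h2 hd.
  under eq_bigr => k _ do rewrite (rk_rec n k g) mulrA mulrBr !mulrA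
    [_ * (s + (n.+2)%:R)]mulrC [_ * (s + 1)]mulrC -!mulrA.
  rewrite -mulr_suml sumrB -!mulr_sumr.
  rewrite (IH l s g sl hc' hd') (IH l (s + 1) (good1 g) sl hc' hd').
  by congr (_ * _); ring.
have hn : (n.+1)%:R != 0 :> K by rewrite natK_eq0.
rewrite -mulr_suml (OS g hs so) -[(n.+1)%:R * _ * _]mulrA mulrC mulKf //.
Qed.

Unset Implicit Arguments.

Lemma DimN_neq0 N nu : is_signature N nu -> DimN N nu != 0.
Proof.
move=> hsig; apply/prodf_neq0 => i _; apply/prodf_neq0 => j hij.
rewrite mulf_neq0 // ?invr_eq0 ?pnatr_eq0 ?intr_eq0 -?lt0n ?subn_gt0 //.
have := sig_le (i := i) (j := j) hsig; rewrite (ltnW hij) ltn_ord => /(_ isT) h.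
apply/negP => /eqP; move: h hij; lia.
Qed.

Theorem theorem3 (N : nat) (nu : seq int) :
  (1 <= N)%N -> is_signature N nu ->
  (forall k : int, (k < nu`_(N.-1)) || (nu`_0 < k) -> Fk N k nu = 0) /\
  Hstar N nu =
    \sum_(k <- irange nu`_(N.-1) nu`_0) cst (Fk N k nu) * ratk N k.
Proof.
case: N => [//|n] _ hsig.
have hs : size nu = n.+1 by case/andP: hsig => /eqP.
split.
  move=> k hk; rewrite /Fk /DimKN subSS subn0.
  case: (chains n [:: k] nu =P 0%N) => [-> | h]; first by rewrite mul0r.
  have := chains_range hs h => /andP[h1 h2]; exfalso; move: hk h1 h2 => /=; lia.
have hD : cst (DimN n.+1 nu) != 0 by rewrite cstE fmorph_eq0 DimN_neq0.
have e := ML good_tvar hsig (lexx _) (lexx _).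
transitivity ((cst (DimN n.+1 nu))^-1 * (cst (DimN n.+1 nu) * Hs n.+1 nu tvar)).
  by rewrite mulKf.
rewrite -e mulr_sumr; apply: eq_bigr => k _.
rewrite /Fk /DimKN subSS subn0 !cstE fmorph_div rmorph_nat.
by rewrite mulrA [_^-1 * _]mulrC.
Qed.
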